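(* Let $C\subseteq\mathbb{F}_2^n$ be a binary linear $[n,k,d]$ code with $\mathbf{1}_n\in C$, whose dual $C^\perp$ has minimum distance $d^\perp$, let $t$ be a positive integer with $$d^\perp-t=\#\{u \mid C_u\neq\emptyset,\ 0<u\le n-t\}=3,$$ and suppose the nonzero weights of $C$ are exactly $d,\ n/2,\ n-d,\ n$ (with $n$ even). If $d^\perp\ge 8$, then $$n^2-(4d+3)n+4d^2+8=0.$$
   Context: $\mathbf{1}_n$ is the all-ones vector; $C^\perp$ is the dual code with respect to the standard inner product; $d^\perp$ is the minimum nonzero weight of $C^\perp$; $C_u=\{c\in C:\mathrm{wt}(c)=u\}$ (Hamming weight). The paper notes that in the case $d^\perp-t=3$ the weight distribution of $C$ is supported on $0,d,n/2,n-d,n$ with $n$ even, and works under this assumption throughout. *)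

(* Defs.v *)
From mathcomp Require Import all_boot all_order all_algebra.
Set Implicit Arguments. Unset Strict Implicit. Unset Printing Implicit Defensive.
Import GRing.Theory.
Local Open Scope ring_scope.

Definition word n := 'rV['F_2]_n.

Definition wt n (c : word n) : nat := #|[set i : 'I_n | c 0 i != 0]|.

Definition ones n : word n := const_mx 1.

Definition dotw n (x y : word n) : 'F_2 := \sum_(i < n) x 0 i * y 0 i.

(* a binary linear code: a subset of F_2^n that is an F_2-subspace
   (over F_2, containing 0 and closed under addition suffices) *)
Definition is_linear_code n (C : {set word n}) : Prop :=
  0 \in C /\ (forall x y, x \in C -> y \in C -> x + y \in C).

Definition dual n (C : {set word n}) : {set word n} :=
  [set x | [forall c in C, dotw x c == 0]].

Definition is_min_weight n (S : {set word n}) (m : nat) : Prop :=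
  (exists2 c, c \in S & (c != 0) /\ wt c = m) /\
  (forall c, c \in S -> c != 0 -> (m <= wt c)%N).

(* u is a weight occurring in C, i.e. C_u is nonempty *)
Definition has_weight n (C : {set word n}) (u : nat) : bool :=
  [exists c in C, wt c == u].

(* Main.v *)
Require Import Defs.
From mathcomp Require Import all_boot all_order all_algebra zify ring lra.
Import GRing.Theory.
Local Open Scope ring_scope.
Lemma F2cases (a : 'F_2) : a = 0 \/ a = 1.
Proof. case: a => [[|[|m]]] H. left; exact: val_inj. right; exact: val_inj. by []. Qed.
Lemma F2xx (a : 'F_2) : a + a = 0.
Proof. case: (F2cases a) => ->; [by rewrite addr0| by apply/eqP]. Qed.

Definition sg (a : 'F_2) : int := if a == 0 then 1 else -1.
Lemma sgD a b : sg (a + b) = sg a * sg b.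
Proof. by case: (F2cases a) => ->; case: (F2cases b) => ->. Qed.
Lemma sg0 : sg 0 = 1. Proof. by []. Qed.
Lemma sg1 : sg 1 = -1. Proof. by []. Qed.

Set Implicit Arguments. Unset Strict Implicit.
Definition fw n (c : word n) : int := \sum_(i < n) sg (c 0 i).

Lemma fwE n (c : word n) : fw c = n%:Z - 2 * (wt c)%:Z.
Proof.
rewrite /fw /wt; set A := [set i : 'I_n | c 0 i != 0].
rewrite (bigID (fun i => i \in A)) /=.
rewrite (eq_bigr (fun _ => -1)); last by move=> i; rewrite inE /sg => /negPf ->.
rewrite [X in _ + X](eq_bigr (fun _ => 1)); last by move=> i; rewrite inE /sg negbK => ->.
rewrite !sumr_const.
have h := cardC A; rewrite card_ord in h.
rewrite (_ : #|[pred i | i \notin A]| = #|[predC A]|); last by apply: eq_card.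
move: h; set a := #|A|; set b := #|[predC A]| => h.
rewrite -h.
rewrite mulNrn !pmulrn.
rewrite !intz; lia.
Qed.

Definition vt n j (t : {ffun 'I_j -> 'I_n}) : word n :=
  \row_i \sum_(l < j) ((t l == i)%:R : 'F_2).

Lemma dotwC n (x y : word n) : dotw x y = dotw y x.
Proof. by apply: eq_bigr => i _; rewrite mulrC. Qed.

Lemma dotwDr n (v x y : word n) : dotw v (x + y) = dotw v x + dotw v y.
Proof. by rewrite /dotw -big_split; apply: eq_bigr => i _; rewrite mxE mulrDr. Qed.

Lemma dotw_vt n j (t : {ffun 'I_j -> 'I_n}) c :
  dotw (vt t) c = \sum_(l < j) c 0 (t l).
Proof.
rewrite /dotw.
under eq_bigr => i _ do rewrite mxE big_distrl /=.
rewrite exchange_big /=; apply: eq_bigr => l _.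
rewrite (bigD1 (t l)) //= eqxx mul1r big1 ?addr0 // => i.
by rewrite eq_sym => /negPf ->; rewrite mul0r.
Qed.

Lemma prod_sg n j (t : {ffun 'I_j -> 'I_n}) (c : word n) :
  \prod_(l < j) sg (c 0 (t l)) = sg (dotw (vt t) c).
Proof.
by rewrite dotw_vt (big_morph sg sgD sg0).
Qed.

Lemma F2xx_w n (x : word n) : x + x = 0.
Proof. by apply/rowP => i; rewrite !mxE F2xx. Qed.

Lemma char_sum n (C : {set word n}) v : is_linear_code C ->
  \sum_(c in C) sg (dotw v c) = if v \in dual C then (#|C|)%:Z else 0.
Proof.
move=> [C0 CD]; case: ifP => hv.
  rewrite (eq_bigr (fun _ => 1)); first by rewrite sumr_const pmulrn intz.
  move=> c cC; move: hv; rewrite inE => /forallP /(_ c); rewrite cC /= => /eqP ->.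
  by [].
have [c0 c0C h0] : exists2 c0, c0 \in C & dotw v c0 = 1.
  move: hv; rewrite inE => /negbT; rewrite negb_forall => /existsP [c0].
  rewrite negb_imply => /andP [c0C hc]; exists c0 => //.
  by case: (F2cases (dotw v c0)) hc => // ->.
set S := (X in X = _).
have : S = - S.
  rewrite {1}/S (reindex_inj (addrI c0)) /= /S -sumrN; apply: eq_big => c.
    apply/idP/idP => h; last exact: CD.
    have := CD _ _ c0C h; by rewrite addrA F2xx_w add0r.
  by move=> _; rewrite dotwDr sgD h0 sg1 mulN1r.
lia.
Qed.

Lemma moment n (C : {set word n}) j : is_linear_code C ->
  \sum_(c in C) fw c ^+ j =
  (#|C|)%:Z * (#|[set t : {ffun 'I_j -> 'I_n} | vt t \in dual C]|)%:Z.
Proof.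
move=> hC.
have e1 : forall c : word n, fw c ^+ j = \prod_(l < j) \sum_(i < n) sg (c 0 i).
  by move=> c; rewrite prodr_const card_ord.
under eq_bigr => c _ do rewrite e1 bigA_distr_bigA /=.
rewrite exchange_big /=.
under eq_bigr => t _ do (under eq_bigr => c _ do rewrite prod_sg; rewrite char_sum //).
rewrite -big_mkcond /= sumr_const -mulr_natr natz.
by congr (_ * Posz _); apply: eq_card => t; rewrite inE.
Qed.

Lemma wt_vt n j (t : {ffun 'I_j -> 'I_n}) : (wt (vt t) <= j)%N.
Proof.
rewrite /wt; apply: (leq_trans (n := #|t @: [set: 'I_j]|)).
  apply: subset_leq_card; apply/subsetP => i; rewrite inE mxE.
  apply: contraR => hi; apply/eqP; apply: big1 => l _.
  case: eqP => // E; case/negP: hi; rewrite -E; apply: imset_f; by rewrite inE.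
by apply: (leq_trans (leq_imset_card _ _)); rewrite cardsT card_ord.
Qed.

Lemma dual0 n (C : {set word n}) : 0 \in dual C.
Proof.
by rewrite inE; apply/forallP => c; apply/implyP => _; rewrite /dotw big1 // => i _; rewrite mxE mul0r.
Qed.

Lemma dual_small n (C : {set word n}) dperp j (t : {ffun 'I_j -> 'I_n}) :
  is_min_weight (dual C) dperp -> (j < dperp)%N -> (vt t \in dual C) = (vt t == 0).
Proof.
move=> [_ hm] hj; apply/idP/eqP; last by move->; exact: dual0.
move=> hv; apply/eqP; apply: contraTT hj => hn.
by rewrite -leqNgt; apply: leq_trans (hm _ hv hn) (wt_vt t).
Qed.

Lemma dual_full n (v : word n) : (v \in dual [set: word n]) = (v == 0).
Proof.
apply/idP/eqP; last by move->; exact: dual0.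
move=> hv; apply/rowP => i; rewrite mxE.
move: hv; rewrite inE => /forallP /(_ (delta_mx 0 i)); rewrite inE /= => /eqP.
rewrite /dotw (bigD1 i) //= big1 ?addr0.
  by rewrite mxE !eqxx mulr1.
by move=> k hk; rewrite mxE (negPf hk) andbF mulr0.
Qed.

Section Full.
Variable n : nat.
Definition Xm m (c : word n) : int := \sum_(i < n | (i < m)%N) sg (c 0 i).
Definition Zc : int := \sum_(c : word n) 1.
Definition Pm j m : int := \sum_(c : word n) Xm m c ^+ j.

Lemma flip0 (i0 : 'I_n) m (G : int -> int) : (m <= i0)%N ->
  \sum_(c : word n) sg (c 0 i0) * G (Xm m c) = 0.
Proof.
move=> hm; set S := (X in X = _).
have : S = - S.
  rewrite {1}/S (reindex_inj (addrI (delta_mx 0 i0))) /= /S -sumrN.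
  apply: eq_bigr => c _.
  have -> : Xm m (delta_mx 0 i0 + c) = Xm m c.
    apply: eq_bigr => i hi; rewrite !mxE.
    have -> : (i == i0) = false by apply/eqP => E; move: hi; rewrite E ltnNge hm.
    by rewrite andbF add0r.
  by rewrite !mxE !eqxx sgD sg1 mulN1r mulNr.
lia.
Qed.

Lemma Xm_step m (hm : (m < n)%N) c : Xm m.+1 c = Xm m c + sg (c 0 (Ordinal hm)).
Proof.
rewrite /Xm (bigD1 (Ordinal hm)) //= addrC; congr (_ + _).
by apply: eq_bigl => i; rewrite ltnS ltn_neqAle andbC.
Qed.

Lemma Xm0 c : Xm 0 c = 0.
Proof. by rewrite /Xm big_pred0. Qed.

Lemma Xmn c : Xm n c = fw c.
Proof. by rewrite /Xm /fw; apply: eq_bigl => i; rewrite ltn_ord. Qed.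

Lemma sgE a : sg a = 1 \/ sg a = -1.
Proof. by case: (F2cases a) => ->; [left|right]. Qed.

Lemma Pm_step m (hm : (m < n)%N) :
  [/\ Pm 2 m.+1 = Pm 2 m + Zc,
      Pm 4 m.+1 = Pm 4 m + 6 * Pm 2 m + Zc &
      Pm 6 m.+1 = Pm 6 m + 15 * Pm 4 m + 15 * Pm 2 m + Zc].
Proof.
set i0 := Ordinal hm.
have hi0 : (m <= i0)%N by [].
have key : forall (E O : int -> int),
   (forall X a, (X + sg a) ^+ 0 = 0 -> True) ->
   forall j, (forall X a, (X + sg a) ^+ j = E X + sg a * O X) ->
   Pm j m.+1 = \sum_(c : word n) E (Xm m c).
  move=> E O _ j h; rewrite /Pm.
  under eq_bigr => c _ do rewrite Xm_step h.
  by rewrite big_split /= (flip0 O hi0) addr0.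
split.
- rewrite (key (fun X => X ^+ 2 + 1) (fun X => 2 * X)) //.
    by rewrite big_split /= /Zc.
  by move=> X a; case: (sgE a) => ->; ring.
- rewrite (key (fun X => X ^+ 4 + 6 * X ^+ 2 + 1) (fun X => 4 * X ^+ 3 + 4 * X)) //.
    by rewrite !big_split /= -mulr_sumr /Zc /Pm.
  by move=> X a; case: (sgE a) => ->; ring.
- rewrite (key (fun X => X ^+ 6 + 15 * X ^+ 4 + 15 * X ^+ 2 + 1)
               (fun X => 6 * X ^+ 5 + 20 * X ^+ 3 + 6 * X)) //.
    by rewrite !big_split /= -!mulr_sumr /Zc /Pm.
  by move=> X a; case: (sgE a) => ->; ring.
Qed.

Lemma Pm_all m : (m <= n)%N ->
  [/\ Pm 2 m = Zc * m%:Z,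
      Pm 4 m = Zc * (3 * m%:Z ^+ 2 - 2 * m%:Z) &
      Pm 6 m = Zc * (15 * m%:Z ^+ 3 - 30 * m%:Z ^+ 2 + 16 * m%:Z)].
Proof.
elim: m => [_|m IH hm].
  have e : forall j, (0 < j)%N -> Pm j 0 = 0.
    by move=> [|j] // _; rewrite /Pm big1 // => c _; rewrite Xm0 expr0n.
  by rewrite !e //; split; ring.
have [h2 h4 h6] := IH (ltnW hm).
have [s2 s4 s6] := Pm_step hm.
rewrite s2 s4 s6 h2 h4 h6 -[m.+1]addn1 !PoszD; split; ring.
Qed.

End Full.

Lemma Zc_neq0 n : Zc n != 0.
Proof.
rewrite /Zc sumr_const natz.
have : (0 < #|{: word n}|)%N by apply/card_gt0P; exists 0.
rewrite /= -/(word n); set k := #|_|; lia.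
Qed.

Lemma card_set_eq (T : finType) (P Q : pred T) :
  (forall x, P x = Q x) -> #|[set x | P x]| = #|[set x | Q x]|.
Proof. by move=> h; apply: eq_card => x; rewrite !inE h. Qed.

Lemma code_moment n (C : {set word n}) dperp j (N : int) :
  is_linear_code C -> is_min_weight (dual C) dperp -> (j < dperp)%N ->
  Pm n j n = Zc n * N -> \sum_(c in C) fw c ^+ j = (#|C|)%:Z * N.
Proof.
move=> hC hd hj hP.
set T := #|[set t : {ffun 'I_j -> 'I_n} | vt t == 0]|.
have hfull : Pm n j n = Zc n * T%:Z.
  have := moment j (C := [set: word n]) (conj (in_setT _) (fun x y _ _ => in_setT _)).
  rewrite (eq_bigl (fun c => true)); last by move=> c; rewrite in_setT.
  rewrite /Pm /Zc sumr_const natz cardsT.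
  rewrite [X in _ -> X = _](eq_bigr (fun c => fw c ^+ j)); last by move=> c _; rewrite Xmn.
  move=> ->; congr (_ * Posz _); rewrite /T; apply: card_set_eq => t; exact: dual_full.
have eT : T%:Z = N by apply: (mulfI (Zc_neq0 n)); rewrite -hfull.
rewrite moment // -eT; congr (_ * Posz _); rewrite /T; apply: card_set_eq => t; exact: (dual_small t hd hj).
Qed.

Lemma card_le1_val m (S : {set 'I_m}) a :
  (forall u, u \in S -> val u = a) -> (#|S| <= 1)%N.
Proof.
move=> h; apply/card_le1_eqP => x y hx hy; apply: val_inj.
by rewrite (h _ hx) (h _ hy).
Qed.

Lemma wt0 n (c : word n) : wt c = 0%N -> c = 0.
Proof.
move/cards0_eq => h; apply/rowP => i; rewrite mxE.
have : i \notin [set i : 'I_n | c 0 i != 0] by rewrite h inE.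
by rewrite inE negbK => /eqP.
Qed.

Lemma wt_le n (c : word n) : (wt c <= n)%N.
Proof. by rewrite /wt; apply: (leq_trans (max_card _)); rewrite card_ord. Qed.

Lemma wtn n (c : word n) : wt c = n -> c = ones n.
Proof.
move=> h.
have hA : [set i : 'I_n | c 0 i != 0] = setT.
  apply/eqP; rewrite eqEcard subsetT cardsT card_ord.
  have h1 : #|[set i : 'I_n | c 0 i != 0]| = n := h. by rewrite h1 /= leqnn.
apply/rowP => i; rewrite !mxE.
have : i \in [set i : 'I_n | c 0 i != 0] by rewrite hA inE.
by rewrite inE; case: (F2cases (c 0 i)) => ->.
Qed.

Lemma wt_zero n : wt (0 : word n) = 0%N.
Proof.
apply/eqP; rewrite cards_eq0; apply/eqP/setP => i; by rewrite !inE mxE eqxx.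
Qed.

Lemma wt_ones n : wt (ones n) = n.
Proof.
rewrite /wt (_ : [set i : 'I_n | ones n 0 i != 0] = setT) ?cardsT ?card_ord //.
by apply/setP => i; rewrite !inE mxE oner_neq0.
Qed.

Theorem proposition4p1 (n k d dperp t : nat) (C : {set word n}) :
  is_linear_code C ->
  #|C| = (2 ^ k)%N ->
  is_min_weight C d ->
  ones n \in C ->
  is_min_weight (dual C) dperp ->
  (0 < t)%N ->
  dperp = (t + 3)%N ->
  #|[set u : 'I_n.+1 | [&& (0 < u)%N, (u <= n - t)%N & has_weight C u]]| = 3%N ->
  ~~ odd n ->
  (forall u : nat, ((0 < u)%N && has_weight C u) =
                   [|| u == d, u == n./2, u == (n - d)%N | u == n]) ->
  (8 <= dperp)%N ->
  ((n%:Z) ^+ 2 - (4 * d%:Z + 3) * n%:Z + 4 * (d%:Z) ^+ 2 + 8 = 0)%R.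
Proof.
move=> hC hk hmin hones hdual ht hdp hcount hodd hw h8.
have [[c1 c1C [c1nz wc1]] _] := hmin.
have d0 : (0 < d)%N.
  rewrite -wc1 lt0n; apply/eqP => /wt0 E; by rewrite E eqxx in c1nz.
have dle : (d <= n)%N by rewrite -wc1 wt_le.
set S := [set u : 'I_n.+1 | _] in hcount.
have hS : forall u : 'I_n.+1, u \in S -> [/\ (0 < u)%N, (u < n)%N &
     [\/ (u : nat) = d, (u : nat) = n./2, (u : nat) = (n - d)%N | (u : nat) = n]].
  move=> u; rewrite inE => /and3P [u0 un uw].
  have : (0 < u)%N && has_weight C u by rewrite u0 uw.
  rewrite hw => /or4P [/eqP|/eqP|/eqP|/eqP] h; (split; [exact: u0 | lia | ]).
  + by constructor 1. + by constructor 2. + by constructor 3. + by constructor 4.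
have n3 : (3 <= n)%N.
  rewrite leqNgt; apply/negP => hn.
  have : (#|S| <= 1)%N.
    apply: (card_le1_val (S := S) (a := 1%N)) => u /hS [u0 un _].
    change (nat_of_ord u = 1%N); lia.
  by rewrite hcount.
have dn : (d < n)%N.
  rewrite ltn_neqAle dle andbT; apply/negP => /eqP dE.
  have : (#|S| <= 1)%N.
    apply: (card_le1_val (S := S) (a := n./2)) => u /hS [u0 un [h|h|h|h]] //;
    change (nat_of_ord u = n./2); lia.
  by rewrite hcount.
have hwt : forall c, c \in C -> c != 0 -> c != ones n ->
    [\/ wt c = d, wt c = n./2 | wt c = (n - d)%N].
  move=> c cC cnz cno.
  have : (0 < wt c)%N && has_weight C (wt c).
    apply/andP; split.
      rewrite lt0n; apply/eqP => /wt0 E; by rewrite E eqxx in cnz.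
    by apply/existsP; exists c; rewrite cC eqxx.
  rewrite hw => /or4P [/eqP|/eqP|/eqP|/eqP] h.
  + by constructor 1. + by constructor 2. + by constructor 3.
  + by move/wtn: h => E; rewrite E eqxx in cno.
have hh : (n./2 * 2)%N = n.
  by rewrite muln2 -{2}(odd_double_half n) (negbTE hodd).
set y : int := (n%:Z - 2 * d%:Z) ^+ 2.
have hg : forall c, c \in C -> c != 0 -> c != ones n ->
    fw c ^+ 2 * (fw c ^+ 2 - y) = 0.
  move=> c cC cnz cno; rewrite fwE.
  case: (hwt c cC cnz cno) => ->.
  + by rewrite /y subrr mulr0.
  + have -> : n%:Z - 2 * (n./2)%:Z = 0 by lia.
    by rewrite expr0n mul0r.
  + have -> : ((n - d)%N)%:Z = n%:Z - d%:Z by lia.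
    by rewrite /y; apply/eqP; rewrite mulf_eq0; apply/orP; right; apply/eqP; ring.
have ones0 : ones n != 0.
  apply/eqP => E; have := wt_ones n; rewrite E wt_zero; lia.
have dec : forall F : word n -> int, \sum_(c in C) F c =
    F 0 + F (ones n) + \sum_(c in C | (c != 0) && (c != ones n)) F c.
  move=> F; rewrite (bigD1 0) //=; last by case: hC.
  rewrite (bigD1 (ones n)) /=; last by rewrite hones ones0.
  by rewrite addrA; congr (_ + _); apply: eq_bigl => c; rewrite andbA.
have f0 : fw (0 : word n) = n%:Z by rewrite fwE wt_zero subr0.
have f1 : fw (ones n) = - n%:Z by rewrite fwE wt_ones; ring.
set Q := \sum_(c in C | (c != 0) && (c != ones n)) fw c ^+ 2.
have Q4 : \sum_(c in C | (c != 0) && (c != ones n)) fw c ^+ 4 = y * Q.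
  rewrite /Q mulr_sumr; apply: eq_bigr => c /andP [cC /andP [cnz cno]].
  apply/eqP; rewrite -subr_eq0; apply/eqP; rewrite -(hg c cC cnz cno); ring.
have Q6 : \sum_(c in C | (c != 0) && (c != ones n)) fw c ^+ 6 = y ^+ 2 * Q.
  rewrite /Q mulr_sumr; apply: eq_bigr => c /andP [cC /andP [cnz cno]].
  apply/eqP; rewrite -subr_eq0; apply/eqP.
  rewrite (_ : fw c ^+ 6 - y ^+ 2 * fw c ^+ 2 =
               (fw c ^+ 2 * (fw c ^+ 2 - y)) * (fw c ^+ 2 + y)); last by ring.
  by rewrite (hg c cC cnz cno) mul0r.
have [P2 P4 P6] := Pm_all (leqnn n).
have e2 := code_moment hC hdual (ltac:(lia) : (2 < dperp)%N) P2.
have e4 := code_moment hC hdual (ltac:(lia) : (4 < dperp)%N) P4.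
have e6 := code_moment hC hdual (ltac:(lia) : (6 < dperp)%N) P6.
rewrite dec f0 f1 in e2; rewrite dec f0 f1 Q4 in e4; rewrite dec f0 f1 Q6 in e6.
rewrite -/Q in e2.
set M := (#|C|)%:Z in e2 e4 e6.
have eQ : Q = M * n%:Z - 2 * n%:Z ^+ 2 by rewrite -e2; ring.
rewrite eQ in e4 e6.
have K : 2 * n%:Z ^+ 3 * (n%:Z ^+ 2 - y) * (n%:Z - 1) * (n%:Z - 2) *
         (y - 3 * n%:Z + 8) = 0.
  rewrite (_ : 2 * n%:Z ^+ 3 * (n%:Z ^+ 2 - y) * (n%:Z - 1) * (n%:Z - 2) *
         (y - 3 * n%:Z + 8) =
    (15 * n%:Z ^+ 3 - 30 * n%:Z ^+ 2 + 16 * n%:Z - y ^+ 2 * n%:Z) *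
      (n%:Z ^+ 4 + (- n%:Z) ^+ 4 + y * (M * n%:Z - 2 * n%:Z ^+ 2) -
       M * (3 * n%:Z ^+ 2 - 2 * n%:Z)) -
    (3 * n%:Z ^+ 2 - 2 * n%:Z - y * n%:Z) *
      (n%:Z ^+ 6 + (- n%:Z) ^+ 6 + y ^+ 2 * (M * n%:Z - 2 * n%:Z ^+ 2) -
       M * (15 * n%:Z ^+ 3 - 30 * n%:Z ^+ 2 + 16 * n%:Z))).
    by rewrite e4 e6 !subrr !mulr0 subrr.
  rewrite /y; ring.
have nz : 2 * n%:Z ^+ 3 * (n%:Z ^+ 2 - y) * (n%:Z - 1) * (n%:Z - 2) != 0.
  have -> : n%:Z ^+ 2 - y = 4 * d%:Z * (n%:Z - d%:Z) by rewrite /y; ring.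
  repeat apply: mulf_neq0; try apply: expf_neq0; lia.
move/eqP: K; rewrite mulf_eq0 (negPf nz) /= => /eqP K.
rewrite -[RHS]K /y; ring.
Qed.
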